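(* Let $\mu$ be a purely atomic positive $\sigma$-finite measure on $(\Omega,\mathcal B)$ whose range $\{\mu(A):A\in\mathcal B\}$ is an interval, and such that for every $\varepsilon>0$, $\mu\big(\bigcup\{A_n: A_n\text{ an atom},\ \mu(A_n)>\varepsilon\}\big)<\infty$. Then for every $t<\mu(\Omega)$ there is a set $C\in\mathcal B$ with $\mu(C)\ge t$ such that the range of the restriction $\mu|_C$ is a finite interval.
   Context: An atom of $\mu$ is a set $A$ with $\mu(A)>0$ such that each measurable subset of $A$ has measure $0$ or $\mu(A)$; $\mu$ is purely atomic if $\Omega$ is, up to a null set, the union of the atoms. $\mu|_C$ denotes $A\mapsto\mu(A\cap C)$. *)

(* Defs.v *)
From HB Require Import structures.
From mathcomp Require Import all_boot all_order all_algebra.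
From mathcomp Require Import all_classical all_reals all_analysis.
Set Implicit Arguments. Unset Strict Implicit. Unset Printing Implicit Defensive.
Import Order.TTheory GRing.Theory Num.Theory.
Local Open Scope classical_set_scope.
Local Open Scope ring_scope.
Local Open Scope ereal_scope.

Definition atom d (T : measurableType d) (R : realType)
  (mu : {measure set T -> \bar R}) (A : set T) : Prop :=
  [/\ measurable A, 0 < mu A &
      forall B, measurable B -> B `<=` A -> mu B = 0 \/ mu B = mu A].

Definition purely_atomic d (T : measurableType d) (R : realType)
  (mu : {measure set T -> \bar R}) : Prop :=
  exists N, [/\ measurable N, mu N = 0 & ~` N `<=` \bigcup_(A in atom mu) A].

Definition ereal_interval (R : realType) (S : set (\bar R)) : Prop :=
  forall x y z, S x -> S y -> x <= z -> z <= y -> S z.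

Definition mrange d (T : measurableType d) (R : realType)
  (mu : {measure set T -> \bar R}) : set (\bar R) :=
  [set mu A | A in measurable].

Definition mrange_restr d (T : measurableType d) (R : realType)
  (mu : {measure set T -> \bar R}) (C : set T) : set (\bar R) :=
  [set mu (A `&` C) | A in measurable].

(* Main.v *)
Require Import Defs.
From HB Require Import structures.
From mathcomp Require Import all_boot all_order all_algebra.
From mathcomp Require Import all_classical all_reals all_analysis.
From mathcomp Require Import lra.
Import Order.TTheory GRing.Theory Num.Theory.
Local Open Scope classical_set_scope.
Local Open Scope ring_scope.
Local Open Scope ereal_scope.

Fixpoint greedy d (T : measurableType d) (R : realType)
  (mu : {measure set T -> \bar R}) (A : nat -> set T)
  (p : nat -> bool) (e : nat -> \bar R) (s : \bar R) (n : nat) : set T :=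
  match n with
  | 0 => set0
  | m.+1 => let G := greedy d T R mu A p e s m in
      if p m && (mu G + mu (A m) + e m <= s) then G `|` A m else G
  end.
Arguments greedy {d T R} mu A p e s n.

Lemma fin_real (R : realType) (x : \bar R) : 0 <= x -> x < +oo -> exists r : R, x = r%:E.
Proof. by case: x => [r| |] // _ _; exists r. Qed.
Arguments fin_real {R x}.

Lemma bound_bigcup d (T : measurableType d) (R : realType)
  (mu : {measure set T -> \bar R}) (G : nat -> set T) (c : \bar R) :
  (forall n, measurable (G n)) -> (forall n, G n `<=` G n.+1) ->
  (forall n, mu (G n) <= c) -> mu (\bigcup_n G n) <= c.
Proof.
move=> mG ndG le.
have nd : nondecreasing_seq G by apply/nondecreasing_seqP => n; apply/subsetPset/ndG.
have h := @nondecreasing_cvg_mu _ _ _ mu _ mG (bigcupT_measurable _ mG) nd.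
rewrite -(cvg_lim _ h) //; apply: lime_le; first by apply/cvg_ex; eexists; exact: h.
by apply: nearW => n; exact: le.
Qed.

Section G.
Context d (T : measurableType d) (R : realType)
  (mu : {measure set T -> \bar R}) (A : nat -> set T)
  (p : nat -> bool) (e : nat -> \bar R) (s : \bar R).

Lemma greedy_meas (mA : forall n, measurable (A n)) n : measurable (greedy mu A p e s n).
Proof. elim: n => [|n IH] /=; first exact: measurable0.
by case: ifP => _ //; exact: measurableU. Qed.

Lemma greedy_sub n x : greedy mu A p e s n x -> exists2 i, (i < n)%N &
  [/\ p i, mu (greedy mu A p e s i) + mu (A i) + e i <= s & A i x].
Proof. elim: n => [|n IH] //=. case: ifP => [/andP[pn hn]|_].
- case=> [/IH [i ? ?]|?]; [exists i => //; exact: ltnW| by exists n].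
- by move/IH => [i ? ?]; exists i => //; exact: ltnW.
Qed.

Lemma greedy_disj (tA : trivIset setT A) n : greedy mu A p e s n `&` A n = set0.
Proof.
apply/seteqP; split => // x [/greedy_sub [i lin [_ _ Ai]] An].
have ne : (A i `&` A n !=set0) by exists x.
by have eq := tA i n I I ne; move: lin; rewrite eq ltnn.
Qed.

Lemma greedy_S (mA : forall n, measurable (A n)) (tA : trivIset setT A) n :
  mu (greedy mu A p e s n.+1) = mu (greedy mu A p e s n) +
    (if p n && (mu (greedy mu A p e s n) + mu (A n) + e n <= s) then mu (A n) else 0).
Proof. rewrite /=; case: ifP => _; last by rewrite adde0.
by rewrite measureU //; [exact: greedy_meas | exact: greedy_disj]. Qed.

Lemma greedy_nd n : greedy mu A p e s n `<=` greedy mu A p e s n.+1.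
Proof. by rewrite /=; case: ifP => _ // x; left. Qed.

Lemma greedy_in n : p n -> mu (greedy mu A p e s n) + mu (A n) + e n <= s ->
  A n `<=` greedy mu A p e s n.+1.
Proof. by move=> pn h /=; rewrite pn h /= => x; right. Qed.

Lemma greedy_le (mA : forall n, measurable (A n)) (tA : trivIset setT A) :
  0 <= s -> (forall n, 0 <= e n) -> forall n, mu (greedy mu A p e s n) <= s.
Proof.
move=> s0 e0; elim=> [|n IH]; first by rewrite /= measure0.
rewrite greedy_S //; case: ifP => [/andP [_ h]|_]; last by rewrite adde0.
by apply: le_trans h; rewrite leeDl.
Qed.

End G.

Theorem lemma3p1 (d : measure_display) (T : measurableType d) (R : realType)
  (mu : {measure set T -> \bar R}) :
  sigma_finite setT mu ->
  purely_atomic mu ->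
  ereal_interval (mrange mu) ->
  (exists A : nat -> set T,
     [/\ forall n, A n = set0 \/ atom mu (A n),
         trivIset setT A,
         mu (~` \bigcup_n A n) = 0 &
         forall eps : R, (0 < eps)%R ->
           mu (\bigcup_(n in [set n | eps%:E < mu (A n)]) A n) < +oo]) ->
  forall t : R, t%:E < mu setT ->
  exists C, [/\ measurable C, t%:E <= mu C,
                ereal_interval (mrange_restr mu C) & mu C < +oo].
Proof.
move=> _ _ Hrange [A [hA tA hN hfin]] t tlt.
have mA n : measurable (A n) by case: (hA n) => [->|[]].
have mbig eps : measurable (\bigcup_(k in [set k | eps%:E < mu (A k)]) A k).
  by apply: bigcup_measurable => k _; exact: mA.
have Afin n : mu (A n) < +oo.
  rewrite ltNge leye_eq; apply/negP => /eqP inf.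
  have := hfin 1%R ltr01.
  have : mu (A n) <= mu (\bigcup_(k in [set k | 1%:E < mu (A k)]) A k).
    apply: le_measure; rewrite ?inE //; apply: bigcup_sup; by rewrite /= inf ltry.
  by rewrite inf leye_eq => /eqP ->.
have [muT|muT] := eqVneq (mu setT) +oo; last first.
  exists setT; split => //; first exact: ltW.
    rewrite (_ : mrange_restr mu setT = mrange mu) //.
    by apply/seteqP; split => x [B mB <-]; exists B => //; rewrite setIT.
  by rewrite lt_neqAle muT leey.
pose s := Num.max t 0%R.
have s0 : (0 <= s)%R by rewrite le_max lexx orbT.
have ts : (t <= s)%R by rewrite le_max lexx.
pose G1 := greedy mu A (fun _ => true) (fun n => mu (A n)) s%:E.
pose C := \bigcup_n G1 n.
have mG1 n : measurable (G1 n) by exact: greedy_meas.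
have mC : measurable C by exact: bigcupT_measurable.
have G1le n : mu (G1 n) <= s%:E.
  apply: greedy_le => //; try by rewrite lee_fin.
have CleS : mu C <= s%:E by apply: bound_bigcup => // n; exact: greedy_nd.
have CgeS : s%:E <= mu C.
  rewrite leNgt; apply/negP => Clt.
  have [g hg] := fin_real (measure_ge0 mu C) (lt_trans Clt (ltry s)).
  pose eps := ((s - g) / 2)%R.
  have eps0 : (0 < eps)%R.
    by rewrite divr_gt0 // subr_gt0 -lte_fin -hg.
  have exc n : ~~ (mu (G1 n) + mu (A n) + mu (A n) <= s%:E) -> eps%:E < mu (A n).
    move=> h.
    have [u hu] := fin_real (measure_ge0 mu (G1 n)) (le_lt_trans (G1le n) (ltry s)).
    have [a ha] := fin_real (measure_ge0 mu (A n)) (Afin n).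
    have uleg : (u <= g)%R.
      rewrite -lee_fin -hu -hg; apply: le_measure; rewrite ?inE //.
      exact: bigcup_sup.
    move: h; rewrite hu ha -!EFinD lee_fin lte_fin -ltNge => h.
    rewrite /eps; lra.
  have sub : setT `<=` (~` \bigcup_n A n) `|` C `|`
      \bigcup_(k in [set k | eps%:E < mu (A k)]) A k.
    move=> x _; have [[n _ Anx]|nx] := pselect ((\bigcup_n A n) x); last by left; left.
    case: (boolP (mu (G1 n) + mu (A n) + mu (A n) <= s%:E)) => h.
      by left; right; exists n.+1 => //; exact: greedy_in.
    by right; exists n => //; exact: exc.
  have mN : measurable (~` \bigcup_n A n) by apply: measurableC; exact: bigcupT_measurable.
  have : mu setT <= mu (~` \bigcup_n A n) + mu C +
      mu (\bigcup_(k in [set k | eps%:E < mu (A k)]) A k).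
    apply: le_trans (le_measure _ _ _ sub) _; rewrite ?inE //.
      by apply: measurableU => //; exact: measurableU.
    apply: le_trans (measureU2 _ _ _) _ => //; first exact: measurableU.
    by rewrite leeD2r // measureU2.
  rewrite muT hN add0e hg leye_eq => /eqP h.
  by move: h (hfin eps eps0); case: (mu (\bigcup_(k in _) A k)) => [r||] //=; rewrite ltxx.
have muC : mu C = s%:E by apply/eqP; rewrite eq_le CleS CgeS.
exists C; split => //; last by rewrite muC ltry.
  by rewrite muC lee_fin.
move=> x y z [B1 mB1 <-] [B2 mB2 <-] xz zy.
have z0 : 0 <= z := le_trans (measure_ge0 _ _) xz.
have zs : z <= s%:E.
  apply: le_trans zy (le_trans _ CleS); apply: le_measure; rewrite ?inE //.
  all: try exact: measurableI.
  all: try exact: subIsetr.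
have [r hr] := fin_real z0 (le_lt_trans zs (ltry s)).
subst z.
pose p1 := fun n => (mu (G1 n) + mu (A n) + mu (A n) <= s%:E).
pose G2 := greedy mu A p1 (fun _ => 0) r%:E.
pose B := \bigcup_n G2 n.
have mG2 n : measurable (G2 n) by exact: greedy_meas.
have mB : measurable B by exact: bigcupT_measurable.
have BC : B `<=` C.
  move=> w [n _ /greedy_sub [i _ [pi _ Ai]]].
  by exists i.+1 => //; exact: greedy_in.
exists B => //; rewrite setIidl //.
have G2le n : mu (G2 n) <= r%:E by apply: greedy_le.
apply/eqP; rewrite eq_le; apply/andP; split.
  by apply: bound_bigcup => // n; exact: greedy_nd.
have rs : (r <= s)%R by rewrite -lee_fin.
have inv n : r%:E + mu (G1 n) <= s%:E + mu (G2 n).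
  elim: n => [|n IH]; first by rewrite /= !measure0 !adde0 lee_fin.
  rewrite /G1 /G2 !greedy_S // -/G1 -/G2 /p1.
  have [u hu] := fin_real (measure_ge0 mu (G1 n)) (le_lt_trans (G1le n) (ltry s)).
  have [v hv] := fin_real (measure_ge0 mu (G2 n)) (le_lt_trans (G2le n) (ltry r)).
  have [a ha] := fin_real (measure_ge0 mu (A n)) (Afin n).
  move: IH; rewrite hu hv ha adde0 -!EFinD !lee_fin /= => IH.
  case: ifP => h1; rewrite ?andTb ?andFb; [case: ifP => h2|]; rewrite ?adde0 -?EFinD lee_fin //; lra.
have BleC : mu B <= mu C by apply: le_measure; rewrite ?inE.
have [b hb] := fin_real (measure_ge0 mu B) (le_lt_trans BleC (le_lt_trans CleS (ltry s))).
rewrite hb lee_fin.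
have : mu C <= (s + b - r)%R%:E.
  apply: bound_bigcup => // [n|n]; first exact: greedy_nd.
  have h1 := inv n.
  have h2 : mu (G2 n) <= mu B by apply: le_measure; rewrite ?inE //; exact: bigcup_sup.
  have [u hu] := fin_real (measure_ge0 mu (G1 n)) (le_lt_trans (G1le n) (ltry s)).
  have [v hv] := fin_real (measure_ge0 mu (G2 n)) (le_lt_trans (G2le n) (ltry r)).
  move: h1 h2; rewrite hu hv hb -!EFinD !lee_fin => h1 h2; lra.
rewrite muC lee_fin => h; lra.
Qed.
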